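(* If $n$ is an odd integer, then $$\sum_{k=1}^\infty\frac{L_n^{2k}}{F_n^{2k}5^k(2k-1)(2k)(2k+1)}=\ln 2-\frac12\ln 5-\ln(F_n)+\frac{n}{\sqrt5}\,\frac{L_{2n}}{F_{2n}}\ln\alpha-\frac12.$$
   Context: $F_n$ and $L_n$ are the Fibonacci and Lucas numbers: $F_0=0,F_1=1$, $L_0=2,L_1=1$, and both satisfy $X_n=X_{n-1}+X_{n-2}$ (extended to all $n\in\mathbb Z$); equivalently $F_n=(\alpha^n-\beta^n)/(\alpha-\beta)$, $L_n=\alpha^n+\beta^n$ with $\alpha=(1+\sqrt5)/2$, $\beta=(1-\sqrt5)/2$. *)

(* Defs.v *)
From Stdlib Require Import Reals ZArith.
From Coquelicot Require Import Coquelicot.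
Open Scope R_scope.

Definition alpha : R := (1 + sqrt 5) / 2.
Definition beta : R := (1 - sqrt 5) / 2.

Definition Fib (n : Z) : R := (powerRZ alpha n - powerRZ beta n) / (alpha - beta).
Definition Luc (n : Z) : R := powerRZ alpha n + powerRZ beta n.

(* Main.v *)
Require Import Defs.
From Stdlib Require Import Reals ZArith Lra Lia.
Open Scope R_scope.
From Stdlib Require Import Reals ZArith Lra Lia.
From Coquelicot Require Import Coquelicot.
Open Scope R_scope.

Lemma ser_ext (a b : nat -> R) (l : R) : (forall n, a n = b n) -> is_series a l -> is_series b l.
Proof. intros H; apply is_series_ext; exact H. Qed.

Lemma ser_plus (a b : nat -> R) (la lb : R) : is_series a la -> is_series b lb ->
  is_series (fun n => a n + b n) (la + lb).
Proof. intros; apply (is_series_plus a b la lb); auto. Qed.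

Lemma ser_minus (a b : nat -> R) (la lb : R) : is_series a la -> is_series b lb ->
  is_series (fun n => a n - b n) (la - lb).
Proof. intros; apply (is_series_minus a b la lb); auto. Qed.

Lemma ser_scal (c : R) (a : nat -> R) (la : R) : is_series a la ->
  is_series (fun n => c * a n) (c * la).
Proof. intros; apply (is_series_scal c a la); auto. Qed.

Lemma ser_shift (a : nat -> R) (l : R) : is_series a l -> is_series (fun n => a (S n)) (l - a 0%nat).
Proof. intros H. apply (is_series_incr_1 a (l - a 0%nat)).
  cut (is_series a (l - a O + a O)). intros H'; exact H'.
  replace (l - a O + a O) with l by ring. exact H. Qed.

Lemma CV_g : CV_radius (fun _ : nat => 1) = 1.
Proof.
  rewrite (CV_radius_finite_DAlembert _ 1).
  - rewrite Rinv_1; reflexivity.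
  - intros; lra.
  - lra.
  - eapply is_lim_seq_ext. 2: apply is_lim_seq_const. intros n; simpl.
    rewrite Rdiv_1_l, Rinv_1, Rabs_R1. reflexivity.
Qed.

Lemma ln_series (x : R) : Rabs x < 1 ->
  is_series (fun n => PS_Int (fun _ => 1) n * x ^ n) (- ln (1 - x)).
Proof.
  intros hx.
  assert (Hr : Rbar_lt (Rabs x) (CV_radius (fun _ : nat => 1))) by (rewrite CV_g; simpl; lra).
  pose proof (is_pseries_RInt _ _ Hr) as H.
  assert (E : RInt (PSeries (fun _ : nat => 1)) 0 x = - ln (1 - x)).
  { rewrite (RInt_ext _ (fun t => / (1 - t))).
    - apply is_RInt_unique.
      replace (- ln (1 - x)) with (minus (- ln (1 - x)) (- ln (1 - 0))).
      2:{ rewrite Rminus_0_r, ln_1. unfold minus, plus, opp; simpl. ring. }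
      apply (is_RInt_derive (fun t => - ln (1 - t))).
      + intros t Ht.
        assert (Habs : Rabs t < 1).
        { apply Rabs_def1; unfold Rmin, Rmax in Ht; destruct (Rle_dec 0 x);
          apply Rabs_def2 in hx; lra. }
        apply Rabs_def2 in Habs.
        auto_derive. lra. field. lra.
      + intros t Ht.
        assert (Habs : Rabs t < 1).
        { apply Rabs_def1; unfold Rmin, Rmax in Ht; destruct (Rle_dec 0 x);
          apply Rabs_def2 in hx; lra. }
        apply Rabs_def2 in Habs.
        apply continuity_pt_filterlim.
        apply continuity_pt_inv. apply continuity_pt_minus.
        apply continuity_pt_const; intros a b; reflexivity.
        apply continuity_pt_id. lra.
    - intros t Ht.
      assert (Habs : Rabs t < 1).
      { apply Rabs_def1; unfold Rmin, Rmax in Ht; destruct (Rle_dec 0 x);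
        apply Rabs_def2 in hx; lra. }
      rewrite PSeries_eq.
      apply is_series_unique.
      eapply is_series_ext. 2: apply (is_series_geom t Habs).
      intros n; unfold scal; simpl; unfold mult; simpl. rewrite Rmult_1_r; symmetry; apply pow_n_pow. }
  rewrite E in H.
  eapply is_series_ext. 2: apply H.
  intros n; unfold scal; simpl; unfold mult; simpl; rewrite pow_n_pow; ring.
Qed.

Lemma odd_extract (b : nat -> R) (l : R) :
  (forall j, b (2 * j)%nat = 0) -> is_series b l ->
  is_series (fun j => b (S (2 * j))) l.
Proof.
  intros h H.
  assert (E : forall N, sum_n (fun j => b (S (2 * j))) N = sum_n b (S (2 * N))).
  { induction N.
    - rewrite sum_O. rewrite sum_Sn, sum_O. pose proof (h 0%nat) as h0. simpl in *.
      unfold plus; simpl. rewrite h0. ring.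
    - rewrite sum_Sn, IHN.
      replace (S (2 * S N)) with (S (S (S (2*N)))) by lia.
      rewrite (sum_Sn b (S (S (2 * N)))), (sum_Sn b (S (2 * N))).
      replace (S (S (2 * N))) with (2 * S N)%nat by lia. rewrite h.
      unfold plus; simpl. ring. }
  unfold is_series.
  eapply filterlim_ext. intros N; symmetry; apply E.
  apply (filterlim_comp _ _ _ (fun N => S (2 * N)) (sum_n b) eventually eventually).
  - apply eventually_subseq. intros; lia.
  - exact H.
Qed.

Lemma ser_eq (a : nat -> R) (l l' : R) : is_series a l -> l = l' -> is_series a l'.
Proof. intros H ->; exact H. Qed.

Lemma P2 (y : R) : Rabs y < 1 ->
  is_series (fun j => y ^ (S j) / INR (S j)) (- ln (1 - y)).
Proof.
  intros hy. pose proof (ser_shift _ _ (ln_series y hy)) as H.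
  eapply ser_eq. eapply ser_ext. 2: exact H.
  - intros j. simpl. unfold Rdiv. ring.
  - simpl. ring.
Qed.

Lemma pow_even (x : R) (j : nat) : x ^ (2 * j) = (x ^ 2) ^ j.
Proof. apply pow_mult. Qed.

Lemma P1 (x : R) : Rabs x < 1 ->
  is_series (fun j => x ^ (S (2 * j)) / INR (S (2 * j))) (/ 2 * (ln (1 + x) - ln (1 - x))).
Proof.
  intros hx.
  assert (hx' : Rabs (- x) < 1) by (rewrite Rabs_Ropp; exact hx).
  pose proof (ser_scal (/ 2) _ _ (ser_minus _ _ _ _ (ln_series x hx) (ln_series (- x) hx'))) as H.
  assert (Hz : forall j : nat, (/ 2 * (PS_Int (fun _ : nat => 1) (2 * j) * x ^ (2 * j)
      - PS_Int (fun _ : nat => 1) (2 * j) * (- x) ^ (2 * j))) = 0).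
  { intros j. rewrite !pow_even. replace ((- x) ^ 2) with (x ^ 2) by ring. ring. }
  pose proof (odd_extract _ _ Hz H) as H2.
  eapply ser_eq. eapply ser_ext. 2: apply H2.
  - intros j. simpl PS_Int. rewrite <- !tech_pow_Rmult, !pow_even.
  - cbv beta. change (PS_Int (fun _ => 1) (S (2*j))) with (1 / INR (S (2*j))).
    replace ((- x) ^ S (2 * j)) with (- x ^ S (2 * j)).
    2:{ replace (- x) with ((-1) * x) by ring. rewrite Rpow_mult_distr, pow_1_odd. ring. }
    replace ((- x) ^ 2) with (x ^ 2) by ring. field. apply not_0_INR; lia.
  - replace (1 - - x) with (1 + x) by ring. ring.
Qed.

Lemma main_x (x : R) : x <> 0 -> Rabs x < 1 ->
  is_series (fun j => let k := INR (S j) in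
     (x ^ 2) ^ (S j) / ((2 * k - 1) * (2 * k) * (2 * k + 1)))
   (/ 2 * ((x + / x) * (/ 2 * (ln (1 + x) - ln (1 - x))) + ln (1 - x ^ 2) - 1)).
Proof.
  intros hx0 hx.
  set (A := / 2 * (ln (1 + x) - ln (1 - x))).
  assert (hx2 : Rabs (x ^ 2) < 1).
  { rewrite <- RPow_abs. pose proof (Rabs_pos x). simpl. nra. }
  pose proof (P1 x hx) as H1. fold A in H1.
  pose proof (ser_scal x _ _ H1) as S1.
  pose proof (P2 _ hx2) as S2.
  pose proof (ser_scal (/ x) _ _ (ser_shift _ _ H1)) as S3.
  pose proof (ser_scal (/ 2) _ _ (ser_plus _ _ _ _ (ser_minus _ _ _ _ S1 S2) S3)) as H.
  eapply ser_eq. eapply ser_ext. 2: exact H.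
  - intros j. cbv beta zeta.
    replace (S (2 * S j)) with (S (S (S (2 * j)))) by lia.
    assert (E1 : x ^ S (2*j) = x * (x^2)^j) by (rewrite <- pow_even; reflexivity).
    assert (E2 : x ^ S (S (S (2*j))) = x^3 * (x^2)^j) by (rewrite <- pow_even; simpl; ring).
    assert (E3 : (x^2)^(S j) = x^2 * (x^2)^j) by reflexivity.
    rewrite E1, E2, E3.
    rewrite !S_INR, mult_INR. simpl (INR 2).
    assert (0 <= INR j) by apply pos_INR.
    field. repeat split; try lra; auto.
  - simpl. field. auto.
Qed.
Theorem theorem11 (n : Z) (hn : Z.Odd n) :
  is_series
    (fun j : nat =>
       let k := INR (S j) in
       Luc n ^ (2 * S j) /
       (Fib n ^ (2 * S j) * 5 ^ (S j) * (2 * k - 1) * (2 * k) * (2 * k + 1)))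
    (ln 2 - / 2 * ln 5 - ln (Fib n)
     + IZR n / sqrt 5 * (Luc (2 * n) / Fib (2 * n)) * ln alpha - / 2).
Proof.
  set (s5 := sqrt 5).
  assert (hs5 : s5 * s5 = 5) by (apply sqrt_sqrt; lra).
  assert (hs5p : 0 < s5) by (apply sqrt_lt_R0; lra).
  assert (hab : alpha - beta = s5) by (unfold alpha, beta; fold s5; field).
  assert (habm : alpha * beta = -1) by (unfold alpha, beta; fold s5; transitivity ((1 - s5 * s5) / 4); [field | rewrite hs5; field]).
  assert (hal : 1 < alpha) by (unfold alpha; fold s5; nra).
  assert (hbe : beta <> 0) by (intros E; rewrite E in habm; lra).
  destruct hn as [m hm].
  assert (hn0 : IZR n <> 0) by (apply not_0_IZR; lia).
  set (a := powerRZ alpha n).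
  set (b := powerRZ beta n).
  assert (ha : a = exp (IZR n * ln alpha)) by (unfold a; rewrite powerRZ_Rpower by lra; reflexivity).
  assert (hapos : 0 < a) by (rewrite ha; apply exp_pos).
  assert (hlna : ln a = IZR n * ln alpha) by (rewrite ha, ln_exp; reflexivity).
  assert (hlnal : 0 < ln alpha) by (rewrite <- ln_1; apply ln_increasing; lra).
  assert (ha1 : a * a <> 1).
  { intros E. assert (ln (a * a) = 0) by (rewrite E; apply ln_1).
    rewrite ln_mult in H by lra. rewrite hlna in H.
    apply hn0. nra. }
  assert (hm1 : powerRZ (-1) n = -1).
  { rewrite hm. rewrite powerRZ_add by lra.
    replace (2 * m)%Z with (m + m)%Z by lia. rewrite powerRZ_add by lra.
    rewrite <- powerRZ_mult. replace (-1 * -1) with 1 by ring. rewrite powerRZ_R1.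
    simpl. ring. }
  assert (hb : b = - / a).
  { assert (E : a * b = -1) by (unfold a, b; rewrite <- powerRZ_mult, habm; exact hm1).
    apply (Rmult_eq_reg_l a); [|lra]. rewrite E. field. lra. }
  assert (hL2 : Luc (2 * n) = a * a + b * b).
  { unfold Luc. replace (2 * n)%Z with (n + n)%Z by lia.
    rewrite !powerRZ_add by lra. reflexivity. }
  assert (hF2 : Fib (2 * n) = (a * a - b * b) / s5).
  { unfold Fib. replace (2 * n)%Z with (n + n)%Z by lia.
    rewrite !powerRZ_add by lra. rewrite hab. reflexivity. }
  assert (hF : Fib n = (a - b) / s5) by (unfold Fib; rewrite hab; reflexivity).
  assert (hL : Luc n = a + b) by reflexivity.
  rewrite hL2, hF2, hF, hL. fold s5.
  rewrite hb. clear hL2 hF2 hF hL hb.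
  set (x := (a + - / a) / ((a - - / a) / s5 * s5)).
  assert (hx : x = (a * a - 1) / (a * a + 1)) by (unfold x; field; repeat split; nra).
  assert (hxa : Rabs x < 1).
  { rewrite hx. apply Rabs_def1.
    - apply Rmult_lt_reg_r with (a * a + 1); [nra|]. field_simplify; nra.
    - apply Rmult_lt_reg_r with (a * a + 1); [nra|]. field_simplify; nra. }
  assert (hx0 : x <> 0).
  { rewrite hx. intros E. apply ha1. 
    assert ((a * a - 1) / (a * a + 1) * (a * a + 1) = 0) by (rewrite E; ring).
    field_simplify in H; nra. }
  assert (hFpos : 0 < (a - - / a) / s5).
  { apply Rdiv_lt_0_compat; [|lra]. assert (0 < / a) by (apply Rinv_0_lt_compat; lra). lra. }
  set (F := (a - - / a) / s5) in *.
  set (L := a + - / a) in *.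
  pose proof (main_x x hx0 hxa) as H.
  eapply ser_eq. eapply ser_ext. 2: exact H.
  - intros j. cbv beta zeta.
    rewrite !pow_mult.
    assert (hx2 : x ^ 2 = L ^ 2 * / (F ^ 2 * 5)).
    { unfold x. rewrite <- hs5. field. lra. }
    rewrite hx2, !Rpow_mult_distr, pow_inv, Rpow_mult_distr.
    rewrite S_INR. pose proof (pos_INR j).
    field. repeat split; try lra; apply pow_nonzero; try lra.
    apply pow_nonzero; lra.
  - assert (h1 : 0 < 1 + x) by (apply Rabs_def2 in hxa; lra).
    assert (h2 : 0 < 1 - x) by (apply Rabs_def2 in hxa; lra).
    assert (E1 : ln (1 + x) - ln (1 - x) = 2 * (IZR n * ln alpha)).
    { rewrite <- ln_div by lra.
      replace ((1 + x) / (1 - x)) with (a * a).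
      - rewrite ln_mult, hlna by lra. ring.
      - rewrite hx. field. repeat split; nra. }
    assert (hFF : 5 * (F * F) = (a + / a) * (a + / a)).
    { unfold F. rewrite <- hs5. field. lra. }
    assert (E2 : ln (1 - x ^ 2) = 2 * ln 2 - ln 5 - 2 * ln F).
    { replace (1 - x ^ 2) with ((2 * 2) / (5 * (F * F))).
      - rewrite ln_div, !ln_mult by nra. ring.
      - rewrite hFF, hx. field. repeat split; nra. }
    set (K := (a * a + - / a * - / a) / ((a * a - - / a * - / a) / s5)).
    assert (E3 : x + / x = 2 * (/ s5 * K)).
    { unfold K. rewrite hx. field. repeat split; try nra. }
    rewrite E1, E2, E3. field. lra.
Qed.
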